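(* Let $X$ be a strongly connected finite digraph with $\delta(X)=0$. Then $\#\mathcal{R}(X)=|m(X)|$, where $\mathcal{R}(X)=\mathcal{BF}_X(\mathbb{Z}V_X)/\mathcal{BF}_X(\mathcal{L}(X))$ and $m(X)=g_X^*(1)/\#\mathrm{BF}(X)_{\rm tors}$.
   Context: Digraph $X=(V_X,E_X)$ with incidence $e\mapsto(o(e),t(e))$; strongly connected means a directed path exists between any two distinct vertices. For finite $X$: $\mathcal{A}_X(v)=\sum_{o(e)=v}t(e)$ on $\mathbb{Z}V_X$, $\mathcal{BF}_X=\mathcal{I}-\mathcal{A}_X$, $\mathrm{BF}(X)=\mathrm{coker}\,\mathcal{BF}_X$, $g_X(u)=\det(\mathcal{I}-\mathcal{A}_Xu)\in\mathbb{Z}[u]$, $r_X=\mathrm{ord}_{u=1}g_X$, $g_X^*(1)$ the coefficient of $(u-1)^{r_X}$ in the Taylor expansion of $g_X$ at $1$, $\delta(X)=r_X-\mathrm{rank}_{\mathbb{Z}}\mathrm{BF}(X)$. When $\delta(X)=0$, $g_X^*(1)$ is a nonzero integer multiple of $\#\mathrm{BF}(X)_{\rm tors}$, and $m(X)$ denotes this integer. $\mathcal{L}(X)=\mathbb{Z}V_X\cap\mathrm{Im}(\mathcal{BF}_{\mathbb{Q}})$ inside $\mathbb{Q}V_X$, where $\mathcal{BF}_{\mathbb{Q}}$ is the extension of $\mathcal{BF}_X$ to $\mathbb{Q}V_X$. *)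

(* Defs.v *)
From HB Require Import structures.
From mathcomp Require Import all_boot all_order all_algebra.
Set Implicit Arguments. Unset Strict Implicit. Unset Printing Implicit Defensive.
Import Order.TTheory GRing.Theory Num.Theory.
Local Open Scope ring_scope.

(* A finite digraph X: vertex set 'I_n, edge set 'I_m, incidence e |-> (o e, t e).
   Multiple edges and loops are allowed. *)

Section Digraph.
Variables (n m : nat) (o t : 'I_m -> 'I_n).

Definition edge_rel : rel 'I_n := fun u v => [exists e, (o e == u) && (t e == v)].

Definition strongly_connected : Prop :=
  forall u v : 'I_n, u != v -> connect edge_rel u v.

(* Matrix of A_X acting on row vectors (ZV_X = 'rV[int]_n):
   e_v *m adjA = \sum_{o e = v} e_{t e}. *)
Definition adjA : 'M[int]_n :=
  \matrix_(i, j) (#|[set e | (o e == i) && (t e == j)]|)%:Z.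

Definition BFmx : 'M[int]_n := 1%:M - adjA.

Definition gX : {poly int} := \det (1%:M - 'X *: map_mx polyC adjA).

(* Taylor expansion at u = 1: g(u) = \sum_k c_k (u-1)^k, c_k = coefficient k of g(x+1) *)
Definition taylor1 (p : {poly int}) : {poly int} := p \Po ('X + 1).

Definition rX : nat := find (fun c : int => c != 0) (taylor1 gX).

Definition gstar1 : int := (taylor1 gX)`_rX.

(* rank_Z BF(X) = dim_Q (coker BF_X ⊗ Q) = n - rank_Q BF_X *)
Definition rankBF : nat := (n - \rank (map_mx (intr : int -> rat) BFmx))%N.

Definition deltaX : int := (rX%:Z - rankBF%:Z).

Definition imBF : 'rV[int]_n -> Prop := fun y => exists x, y = x *m BFmx.

Definition latL : 'rV[int]_n -> Prop :=
  fun y => exists x : 'rV[rat]_n,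
              map_mx (intr : int -> rat) y = x *m map_mx (intr : int -> rat) BFmx.

Definition imBF_L : 'rV[int]_n -> Prop :=
  fun y => exists2 x, latL x & y = x *m BFmx.

End Digraph.

(* For subgroups H <= G of 'rV[int]_n: the quotient G/H is finite with exactly k
   elements, witnessed by a complete system of k pairwise incongruent
   representatives of the cosets of H in G. *)
Definition quot_card (n : nat) (G H : 'rV[int]_n -> Prop) (k : nat) : Prop :=
  exists s : 'I_k -> 'rV[int]_n,
    [/\ forall i, G (s i),
        forall i j, H (s i - s j) -> i = j
      & forall g, G g -> exists i, H (g - s i)].

(* Main.v *)
Require Import Defs.
From HB Require Import structures.
From mathcomp Require Import all_boot all_order all_algebra.
From mathcomp Require Import zify ring.
Set Implicit Arguments. Unset Strict Implicit. Unset Printing Implicit Defensive.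
Import Order.TTheory GRing.Theory Num.Theory.
Local Open Scope ring_scope.

Lemma quot_card_fin n (T : finType) (G H : 'rV[int]_n -> Prop) (s : T -> 'rV[int]_n) :
  (forall i, G (s i)) -> (forall i j, H (s i - s j) -> i = j) ->
  (forall g, G g -> exists i, H (g - s i)) -> quot_card G H #|T|.
Proof.
move=> Gs Hs Cs; exists (fun i => s (enum_val i)); split.
- by move=> i; apply: Gs.
- by move=> i j /Hs /enum_val_inj.
- by move=> g /Cs [i Hi]; exists (enum_rank i); rewrite enum_rankK.
Qed.

Lemma quot_transport n (M K : 'M[int]_n) k (G H : 'rV[int]_n -> Prop) :
  quot_card (fun _ : 'rV[int]_n => True) (fun y => exists x, y = x *m M) k ->
  (forall g, G g <-> exists v, g = v *m K) ->
  (forall h, H h <-> exists v, h = v *m M *m K) ->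
  (forall v : 'rV[int]_n, v *m K = 0 -> exists x, v = x *m M) ->
  quot_card G H k.
Proof.
move=> [s [_ Hs Cs]] EG EH Ker.
exists (fun i => s i *m K); split.
- by move=> i; apply/EG; exists (s i).
- move=> i j /EH [v e]; apply: Hs.
  have [x ex] : exists x, s i - s j - v *m M = x *m M.
    by apply: Ker; rewrite !mulmxBl e subrr.
  by exists (x + v); rewrite mulmxDl -ex subrK.
- move=> g /EG [v ->]; have [i [x ex]] := Cs v I.
  by exists i; apply/EH; exists x; rewrite -ex mulmxBl.
Qed.

Lemma small_dvd (x d : int) : (d %| x)%Z -> (`|x| < `|d|)%N -> x = 0.
Proof.
rewrite dvdzE => hd hlt; apply/eqP; rewrite -absz_eq0; apply/eqP.
case: (posnP `|x|%N) => // hx; have := dvdn_leq hx hd; lia.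
Qed.



Lemma quot_diag n (d : 'rV[int]_n) : (forall i, d 0 i != 0) ->
  quot_card (fun _ : 'rV[int]_n => True) (fun y => exists x, y = x *m diag_mx d)
    (\prod_i `|d 0%R i|)%N.
Proof.
move=> dnz.
have -> : (\prod_i `|d 0%R i|)%N = #|{dffun forall i : 'I_n, 'I_(`|d 0 i|)}|.
  rewrite card_dep_ffun foldr_map.
  rewrite -big_enum /= unlock /reducebig /=.
  by elim: (enum 'I_n) => //= i r ->; rewrite card_ord.
apply: (@quot_card_fin n {dffun forall i : 'I_n, 'I_(`|d 0%R i|)} (fun _ => True) (fun y => exists x, y = x *m diag_mx d) (fun f => \row_j ((f j : nat)%:Z))).
- by [].
- move=> f g [x]; rewrite mul_mx_diag => /matrixP e.
  apply/ffunP => j; apply/val_inj => /=.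
  have := e 0 j; rewrite !mxE => ej.
  have hd : (d 0%R j %| (f j)%:Z - (g j)%:Z)%Z by rewrite ej dvdz_mull.
  have := small_dvd hd.
  have := ltn_ord (f j); have := ltn_ord (g j).
  move=> h1 h2 h3.
  have h4 : (`|(f j)%:Z - (g j)%:Z| < `|d 0%R j|)%N.
    move: h1 h2; move: (f j : nat) (g j : nat) => a b.
    lia.
  by move: (h3 h4) => /eqP; rewrite subr_eq0 => /eqP [].
- move=> v _.
  have hm : forall j, (`|(v 0%R j %% d 0%R j)%Z| < `|d 0%R j|)%N.
    move=> j; have := ltz_mod (v 0 j) (dnz j); have := modz_ge0 (v 0 j) (dnz j); lia.
  exists (finfun (fun j => Ordinal (hm j))).
  exists (\row_j (v 0%R j %/ d 0%R j)%Z); rewrite mul_mx_diag; apply/matrixP => i j.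
  rewrite (ord1 i) !mxE ffunE /= gez0_abs ?modz_ge0 //.
  by rewrite {1}(divz_eq (v 0 j) (d 0 j)) addrK.
Qed.

Lemma unitz_abs (x : int) : x \is a GRing.unit -> `|x|%N = 1%N.
Proof. by case/orP => /eqP ->. Qed.

Lemma smith_diag n (d : seq int) :
  (\matrix_(i, j) (d`_i *+ (i == j :> nat)) : 'M[int]_n) = diag_mx (\row_i d`_i).
Proof. by apply/matrixP => i j; rewrite !mxE. Qed.

Lemma abszprod n (F : 'I_n -> int) : `|(\prod_i F i)%R|%N = (\prod_i `|F i|)%N.
Proof. by apply: (big_morph absz abszM). Qed.

Lemma quot_det n (M : 'M[int]_n) : \det M != 0 ->
  quot_card (fun _ : 'rV[int]_n => True) (fun y => exists x, y = x *m M) `|\det M|%N.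
Proof.
move=> dM.
have [L uL [R uR [d _ eM]]] := int_Smith_normal_form M.
rewrite smith_diag in eM; set D := diag_mx _ in eM.
have dD : \det M = \det L * \det D * \det R by rewrite eM !det_mulmx.
have h1 : `|\det L|%N = 1%N by apply: unitz_abs; rewrite -unitmxE.
have h2 : `|\det R|%N = 1%N by apply: unitz_abs; rewrite -unitmxE.
have -> : `|\det M|%N = `|\det D|%N.
  rewrite dD !abszM h1 h2. by rewrite (mul1n (`|\det D|%N)) muln1.
have dnz : forall i, (\row_i d`_i : 'rV[int]_n) 0 i != 0.
  move=> i; apply/eqP => h; move: dM; rewrite dD /D det_diag (bigD1 i) //= h.
  by rewrite mul0r mulr0 mul0r eqxx.
rewrite /D det_diag abszprod.
apply: (quot_transport (K := R) (quot_diag dnz)).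
- move=> g; split => // _; exists (g *m invmx R); by rewrite mulmxKV.
- move=> h; split => [[x ->]|[v ->]]; first by exists (x *m L); rewrite eM !mulmxA.
  by exists (v *m invmx L); rewrite eM !mulmxA mulmxKV.
- move=> v hv; exists 0; rewrite mul0mx.
  by rewrite -(mulmxK uR v) hv mul0mx.
Qed.

Definition dg (R : pzSemiRingType) n (f : 'I_n -> R) : 'M[R]_n := diag_mx (\row_i f i).

Lemma dgE (R : pzSemiRingType) n (f : 'I_n -> R) i j : dg f i j = f i *+ (i == j).
Proof. by rewrite /dg !mxE. Qed.

Lemma dgM (R : pzSemiRingType) n (f g : 'I_n -> R) : dg f *m dg g = dg (fun i => f i * g i).
Proof. by rewrite /dg mul_diag_mx; apply/matrixP => i j; rewrite !mxE mulrnAr. Qed.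

Lemma dgD (R : pzSemiRingType) n (f g : 'I_n -> R) : dg f + dg g = dg (fun i => f i + g i).
Proof. by apply/matrixP => i j; rewrite !mxE mulrnDl. Qed.

Lemma dg1 (R : pzSemiRingType) n : dg (fun _ : 'I_n => 1 : R) = 1%:M.
Proof. by apply/matrixP => i j; rewrite !mxE. Qed.

Lemma dg_eq (R : pzSemiRingType) n (f g : 'I_n -> R) : f =1 g -> dg f = dg g.
Proof. by move=> e; apply/matrixP => i j; rewrite !dgE e. Qed.

Lemma map_dg (R S : pzSemiRingType) (h : {rmorphism R -> S}) n (f : 'I_n -> R) :
  map_mx h (dg f) = dg (fun i => h (f i)).
Proof. by apply/matrixP => i j; rewrite !mxE rmorphMn. Qed.

Lemma mul_row_dg (R : pzSemiRingType) n (v : 'rV[R]_n) f :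
  v *m dg f = \row_j (v 0 j * f j).
Proof. by rewrite /dg mul_mx_diag; apply/matrixP => i j; rewrite (ord1 i) !mxE. Qed.

Lemma det_dg (R : comPzRingType) n (f : 'I_n -> R) : \det (dg f) = \prod_i f i.
Proof. by rewrite /dg det_diag; apply: eq_bigr => i _; rewrite mxE. Qed.

Lemma mul_dg_mx (R : pzSemiRingType) n (f : 'I_n -> R) (A : 'M_n) i j :
  (dg f *m A) i j = f i * A i j.
Proof. by rewrite /dg mul_diag_mx !mxE. Qed.

Lemma prod_if n s (R : pzRingType) (x : R) :
  \prod_(i < n) (if (i < s)%N then 1 else x) = x ^+ (n - s).
Proof.
elim: n => [|n IH]; first by rewrite big_ord0.
rewrite big_ord_recr /= IH; case: ltnP => h.
  by rewrite mulr1; congr (_ ^+ _); lia.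
by rewrite -exprSr; congr (_ ^+ _); lia.
Qed.

Lemma dg0 (R : pzSemiRingType) n : dg (fun _ : 'I_n => 0 : R) = 0.
Proof. by apply/matrixP => i j; rewrite !mxE mul0rn. Qed.

Section Main.
Variables (n : nat) (B P Q : 'M[int]_n) (d : seq int) (s : nat).
Hypotheses (uP : P \in unitmx) (uQ : Q \in unitmx) (sn : (s <= n)%N)
  (hs : forall i : 'I_n, (d`_i != 0) = (i < s)%N).

Definition eE (i : 'I_n) : int := (i < s)%N%:R.
Definition eF (i : 'I_n) : int := (s <= i)%N%:R.
Definition eDF (i : 'I_n) : int := if (i < s)%N then d`_i else 1.
Definition Em := dg eE.
Definition Fm := dg eF.
Definition Dm := dg (fun i : 'I_n => d`_i).
Definition DFm := dg eDF.
Definition Cm := Q *m P.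
Definition Mm := Em *m Cm *m Em + Fm.

Hypothesis hB : B = P *m Dm *m Q.

Lemma d0 (i : 'I_n) : (s <= i)%N -> d`_i = 0.
Proof. by move=> h; apply/eqP; apply: contraTT h; rewrite hs -ltnNge. Qed.

Ltac pw := apply: dg_eq; let i := fresh "i" in let h := fresh "h" in
  move=> i; rewrite /eE /eF /eDF; case: (ltnP i s) => h; [|rewrite ?(d0 h)];
  rewrite /= ?mulr1n ?mulr0n ?mulr1 ?mul1r ?mulr0 ?mul0r ?addr0 ?add0r.

Lemma EF1 : Em + Fm = 1%:M.
Proof. by rewrite -dg1 dgD; pw. Qed.
Lemma FE0 : Fm *m Em = 0.
Proof. by rewrite dgM -dg0; pw. Qed.
Lemma EF0 : Em *m Fm = 0.
Proof. by rewrite dgM -dg0; pw. Qed.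
Lemma EE : Em *m Em = Em.
Proof. by rewrite dgM; pw. Qed.
Lemma FF : Fm *m Fm = Fm.
Proof. by rewrite dgM; pw. Qed.
Lemma DFE : DFm *m Em = Dm.
Proof. by rewrite dgM; pw. Qed.
Lemma ED : Em *m Dm = Dm.
Proof. by rewrite dgM; pw. Qed.
Lemma DE : Dm *m Em = Dm.
Proof. by rewrite dgM; pw. Qed.
Lemma FD : Fm *m Dm = 0.
Proof. by rewrite dgM -dg0; pw. Qed.
Lemma DF0 : Dm *m Fm = 0.
Proof. by rewrite dgM -dg0; pw. Qed.
Lemma FDF : Fm *m DFm = Fm.
Proof. by rewrite dgM; pw. Qed.
Lemma DFDF : Dm + Fm = DFm.
Proof. by rewrite dgD; pw. Qed.
Lemma detDF : \det DFm != 0.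
Proof.
rewrite det_dg; apply/prodf_neq0 => i _; rewrite /eDF; case: ifP => h //.
by rewrite hs.
Qed.


Definition latB (y : 'rV[int]_n) := exists x : 'rV[rat]_n,
  map_mx (intr : int -> rat) y = x *m map_mx (intr : int -> rat) B.
Definition imB (y : 'rV[int]_n) := exists x, y = x *m B.
Definition imBL (y : 'rV[int]_n) := exists2 x, latB x & y = x *m B.

Lemma unitQ (X : 'M[int]_n) : X \in unitmx -> map_mx (intr : int -> rat) X \in unitmx.
Proof.
by rewrite !unitmxE det_map_mx unitfE intr_eq0 => /orP[] /eqP ->.
Qed.

Lemma mapq_inj (X Y : 'rV[int]_n) : map_mx (intr : int -> rat) X = map_mx intr Y -> X = Y.
Proof.
move=> e; apply/matrixP => i j; have := congr1 (fun M : 'rV[rat]_n => M i j) e; rewrite !mxE.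
by move/eqP; rewrite eqr_int => /eqP.
Qed.

Lemma partB y : imB y <-> exists v, y = v *m (Dm *m Q).
Proof.
rewrite /imB hB; split => [[x ->]|[v ->]].
  by exists (x *m P); rewrite !mulmxA.
by exists (v *m invmx P); rewrite !mulmxA mulmxKV.
Qed.

Lemma partA y : latB y <-> exists v, y = v *m (Em *m Q).
Proof.
rewrite /latB hB; split => [[x ex]|[v ->]].
  set w := y *m invmx Q.
  have wF : w *m Fm = 0.
    apply: mapq_inj; rewrite /w map_mx0 !map_mxM ex !map_mxM.
    rewrite !mulmxA -(mulmxA _ (map_mx intr Q)) -map_mxM mulmxV // map_mx1 mulmx1.
    by rewrite -!mulmxA -map_mxM DF0 map_mx0 !mulmx0.
  exists w; rewrite -[LHS](mulmxKV uQ) -/w mulmxA.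
  by rewrite -[w in LHS]mulmx1 -EF1 mulmxDr wF addr0.
have uP' := unitQ uP.
have uDF' : map_mx (intr : int -> rat) DFm \in unitmx.
  by rewrite unitmxE det_map_mx unitfE intr_eq0 detDF.
exists (map_mx intr (v *m Em) *m invmx (map_mx intr DFm) *m invmx (map_mx intr P)).
rewrite -DFE -{1}EE !map_mxM !mulmxA (mulmxKV uP') (mulmxKV uDF').
by rewrite -(mulmxA (map_mx intr v)) -map_mxM EE.
Qed.

Lemma partC y : imBL y <-> exists v, y = v *m Mm *m (Dm *m Q).
Proof.
have eM : Mm *m (Dm *m Q) = Em *m Q *m B.
  rewrite /Mm mulmxA mulmxDl -!mulmxA ED FD addr0 hB.
  by rewrite !mulmxA.
split => [[x /partA [v ->] ->]|[v ->]].
  by exists v; rewrite -[RHS]mulmxA eM !mulmxA.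
exists (v *m (Em *m Q)); first by apply/partA; exists v.
by rewrite -[LHS]mulmxA eM !mulmxA.
Qed.

Lemma part1 : quot_card latB imB `|\det DFm|%N.
Proof.
apply: (quot_transport (M := DFm) (K := Em *m Q) (quot_det detDF)).
- exact: partA.
- move=> h; rewrite partB.
  have e : forall v : 'rV[int]_n, v *m DFm *m (Em *m Q) = v *m (Dm *m Q).
    by move=> v; rewrite -mulmxA (mulmxA DFm) DFE.
  by split=> [[v ->]|[v ->]]; exists v; rewrite e.
- move=> v hv; exists (v *m Fm).
  have vE : v *m Em = 0 by rewrite -(mulmxK uQ (v *m Em)) -(mulmxA v) hv mul0mx.
  by rewrite -mulmxA FDF -{1}(mulmx1 v) -EF1 mulmxDr vE add0r.
Qed.

Lemma detMm_nz : \det Mm != 0 -> quot_card imB imBL `|\det Mm|%N.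
Proof.
move=> dM.
apply: (quot_transport (M := Mm) (K := Dm *m Q) (quot_det dM)).
- exact: partB.
- exact: partC.
- move=> v hv; exists (v *m Fm).
  have vD : v *m Dm = 0 by rewrite -(mulmxK uQ (v *m Dm)) -(mulmxA v) hv mul0mx.
  have vE : v *m Em = 0.
    apply/matrixP => i j; have := congr1 (fun M : 'rV[int]_n => M i j) vD.
    rewrite /Em /Dm !mul_row_dg !mxE /eE; case: ltnP => h; last by rewrite mulr0.
    have := hs j; rewrite h => /negbTE dj.
    by rewrite mulr1 => /eqP; rewrite mulf_eq0 dj orbF => /eqP.
  rewrite /Mm -mulmxA mulmxDr !mulmxA FE0 !mul0mx add0r FF.
  by rewrite -{1}(mulmx1 v) -EF1 mulmxDr vE add0r.
Qed.

Lemma DFF : DFm *m Fm = Fm.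
Proof. by rewrite dgM; pw. Qed.
Lemma EDF : Em *m DFm = Dm.
Proof. by rewrite dgM; pw. Qed.

Lemma detMm_rel : `|\det (Em *m Cm + Fm)|%N = `|\det Mm|%N.
Proof.
set X := Em *m Cm *m Fm.
have XX : X *m X = 0.
  by rewrite /X !mulmxA -(mulmxA _ Fm Em) FE0 mulmx0 !mul0mx.
have e1 : (1%:M + X) *m Mm = Em *m Cm + Fm.
  rewrite /Mm mulmxDl mul1mx !mulmxDr /X !mulmxA -(mulmxA _ Fm Em) FE0 mulmx0 !mul0mx add0r.
  by rewrite -(mulmxA _ Fm Fm) FF addrAC -mulmxDr EF1 mulmx1.
have e2 : (1%:M + X) *m (1%:M - X) = 1%:M.
  by rewrite mulmxDl mul1mx mulmxBr mulmx1 XX subr0 subrK.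
have u : `|\det (1%:M + X)|%N = 1%N.
  have := congr1 (fun M => `|\det M|%N) e2; rewrite /= det_mulmx det1 abszM.
  by move/eqP; rewrite muln_eq1 => /andP [/eqP].
by rewrite -e1 det_mulmx abszM u mul1n.
Qed.

Lemma rankB : \rank (map_mx (intr : int -> rat) B) = s.
Proof.
have uP' := unitQ uP; have uQ' := unitQ uQ.
have uDF' : map_mx (intr : int -> rat) DFm \in unitmx.
  by rewrite unitmxE det_map_mx unitfE intr_eq0 detDF.
rewrite hB !map_mxM mxrankMfree ?row_free_unit //.
rewrite -mxrank_tr trmx_mul mxrankMfree ?row_free_unit ?unitmx_tr // mxrank_tr.
rewrite -EDF map_mxM mxrankMfree ?row_free_unit //.
have -> : map_mx (intr : int -> rat) Em = pid_mx s.
  apply/matrixP => i j; rewrite /Em map_dg dgE !mxE /eE.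
  have -> : (i == j :> nat) = (i == j) by [].
  by case: (i < s)%N; case: (i == j); rewrite /= ?rmorph1 ?rmorph0.
by rewrite rank_pid_mx.
Qed.

Definition gB : {poly int} := \det (1%:M - 'X *: map_mx polyC (1%:M - B)).
Definition Nn : 'M[{poly int}]_n :=
  ('X + 1) *: map_mx polyC (Dm *m Cm) - 'X *: map_mx polyC Em + map_mx polyC Fm.
Definition hpol := \det Nn.

Lemma step1 : gB \Po ('X + 1) = \det (('X + 1) *: map_mx polyC B - 'X *: 1%:M).
Proof.
rewrite /gB -(det_map_mx (comp_poly ('X + 1))); congr (\det _); apply/matrixP => i j.
rewrite !mxE rmorphB /= rmorphM /= comp_polyX comp_polyC rmorph_nat.
rewrite rmorphB /= rmorph_nat.
case: (i == j) => /=; ring.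
Qed.

Lemma detP_nz : \det P != 0.
Proof. by move: uP; rewrite unitmxE => /orP[] /eqP ->. Qed.

Lemma step2 : \det (('X + 1) *: map_mx polyC B - 'X *: 1%:M) =
  \det (('X + 1) *: map_mx polyC (Dm *m Cm) - 'X *: 1%:M).
Proof.
set Pp := map_mx (@polyC int) P.
have e : (('X + 1) *: map_mx polyC B - 'X *: 1%:M) *m Pp =
         Pp *m (('X + 1) *: map_mx polyC (Dm *m Cm) - 'X *: 1%:M).
  rewrite mulmxBl mulmxBr -!scalemxAl -!scalemxAr mul1mx mulmx1.
  by rewrite /Pp -!map_mxM hB /Cm !mulmxA.
have h := congr1 determinant e; rewrite !det_mulmx in h.
have nz : \det Pp != 0 by rewrite /Pp det_map_mx polyC_eq0 detP_nz.
by apply: (mulIf nz); rewrite h mulrC.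
Qed.

Definition cpol (i : 'I_n) : {poly int} := if (i < s)%N then 1 else - 'X.

Lemma step3 : ('X + 1) *: map_mx polyC (Dm *m Cm) - 'X *: 1%:M = dg cpol *m Nn.
Proof.
have eDC : Dm *m Cm = \matrix_(i, j) (d`_i * Cm i j).
  by apply/matrixP=> a b; rewrite mul_dg_mx mxE.
apply/matrixP => i j; rewrite mul_dg_mx /Nn eDC !mxE /cpol /eE /eF.
case: (ltnP i s) => h; last rewrite (d0 h).
  case: (i == j); rewrite /= ?mulr1n ?mulr0n ?rmorph0 ?rmorph1 ?rmorphM /=; ring.
case: (i == j); rewrite /= ?mulr1n ?mulr0n ?rmorph0 ?rmorph1 ?rmorphM /=; ring.
Qed.

Lemma taylorB : gB \Po ('X + 1) = (- 'X) ^+ (n - s) * hpol.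
Proof.
rewrite step1 step2 step3 det_mulmx det_dg /cpol prod_if //.
Qed.

Lemma hpol0 : hpol.[0] = \det DFm * \det (Em *m Cm + Fm).
Proof.
rewrite -det_mulmx mulmxDr mulmxA DFE DFF.
rewrite /hpol -horner_evalE -det_map_mx; congr (\det _).
apply/matrixP => i j; rewrite /Nn !mxE.
rewrite /= /horner_eval !hornerE; ring.
Qed.

Lemma coefT i : (gB \Po ('X + 1))`_i =
  (-1) ^+ (n - s) * (if (i < n - s)%N then 0 else hpol`_(i - (n - s))).
Proof.
rewrite taylorB (exprNn 'X) -mulrA (_ : (-1) ^+ (n - s) = ((-1) ^+ (n - s))%:P :> {poly int}).
  by rewrite mul_polyC coefZ coefXnM.
by rewrite rmorph_sign.
Qed.

Lemma T_nz : gB \Po ('X + 1) != 0.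
Proof.
apply/negP => /eqP h; have := congr1 (horner^~ (-1)) h.
rewrite horner_comp !hornerE addNr /gB.
rewrite -horner_evalE -det_map_mx.
have -> : map_mx (horner_eval 0) (1%:M - 'X *: map_mx polyC (1%:M - B)) = 1%:M.
  apply/matrixP => i j; rewrite !mxE /= /horner_eval !hornerE; by case: (i == j); rewrite /= ?hornerE.
move=> e; have : \det (1%:M : 'M[int]_n) = 0 by []. by rewrite det1 => /eqP; rewrite oner_eq0.
Qed.

Lemma main_sec : find (fun c : int => c != 0) (gB \Po ('X + 1)) = (n - s)%N ->
  exists tors : nat, [/\ quot_card latB imB tors,
     (tors%:Z %| (gB \Po ('X + 1))`_(n - s))%Z
   & quot_card imB imBL `|((gB \Po ('X + 1))`_(n - s) %/ tors%:Z)%Z|%N].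
Proof.
set T := gB \Po ('X + 1) => hf.
have e0 : hpol`_0 = \det DFm * \det (Em *m Cm + Fm) by rewrite -horner_coef0 hpol0.
have h0 : hpol`_0 != 0.
  apply/negP => /eqP z.
  have hasT : has (fun c : int => c != 0) T.
    apply/negPn/negP => /hasPn H; apply/negP: T_nz; apply/negPn/eqP/polyP => i.
    rewrite coef0; case: (ltnP i (size T)) => hi; last by rewrite nth_default.
    by apply/eqP; apply/negPn/H/mem_nth.
  have := nth_find 0 hasT; rewrite hf /T coefT ltnn subnn z mulr0 eqxx.
  by [].
have eT : T`_(n - s) = (-1) ^+ (n - s) * (\det DFm * \det (Em *m Cm + Fm)).
  by rewrite /T coefT ltnn subnn e0.
have nzE : \det (Em *m Cm + Fm) != 0 by move: h0; rewrite e0 mulf_eq0 negb_or => /andP[].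
have nzM : \det Mm != 0.
  by rewrite -absz_eq0 -detMm_rel absz_eq0.
exists `|\det DFm|%N; split.
- exact: part1.
- by rewrite eT dvdzE abszMsign abszM /= dvdn_mulr.
- have -> : `|(T`_(n - s) %/ (`|\det DFm|%N)%:Z)%Z|%N = `|\det Mm|%N.
    rewrite eT; set a := \det DFm; set b := \det (Em *m Cm + Fm).
    have -> : (-1) ^+ (n - s) * (a * b) = ((-1) ^+ (n - s) * (sgz a * b)) * (`|a|%N)%:Z.
      by rewrite {1}(intEsg a); ring.
    rewrite mulzK; last by rewrite eqz_nat absz_eq0 detDF.
    rewrite abszMsign abszM -detMm_rel -/b (_ : `|sgz a|%N = 1%N) ?mul1n //.
    by move: detDF; rewrite -/a; case: sgzP.
  exact: detMm_nz.
Qed.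

End Main.



Lemma smith_s (n : nat) (d : seq int) : sorted (fun a b => (a %| b)%Z) d ->
  forall i : 'I_n, (d`_i != 0) = (i < minn (find (fun x : int => x == 0%R) d) n)%N.
Proof.
move=> sd i.
have ltin := ltn_ord i.
case: (ltnP i (find (fun x : int => x == 0%R) d)) => hi.
  have := before_find 0 hi => /= ->.
  by apply/esym; rewrite leq_min hi ltin.
have -> : (i < minn (find (fun x : int => x == 0%R) d) n)%N = false.
  by apply/negbTE; rewrite -leqNgt geq_min hi.
apply/negbTE; rewrite negbK.
case: (ltnP i (size d)) => hsz; last by rewrite nth_default.
have hf : (find (fun x : int => x == 0%R) d < size d)%N by apply: leq_ltn_trans hsz.
have hh : has (fun x : int => x == 0%R) d by rewrite has_find.
have := nth_find 0 hh => /= /eqP f0.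
move: hi; rewrite leq_eqVlt => /orP [/eqP <-|hi]; first by rewrite f0.
have := sorted_ltn_nth dvdz_trans 0 sd; move/(_ (find (fun x : int => x == 0%R) d) i hf hsz hi).
by rewrite f0 dvd0z.
Qed.

Unset Implicit Arguments.


Theorem theorem2p11 (n m : nat) (o t : 'I_m -> 'I_n) :
  strongly_connected o t ->
  deltaX o t = 0 ->
  exists tors : nat,
    [/\ quot_card (latL o t) (imBF o t) tors,
        (tors%:Z %| gstar1 o t)%Z
      & quot_card (imBF o t) (imBF_L o t) `|(gstar1 o t %/ tors%:Z)%Z|%N].
Proof.
move=> _ hdelta.
have [L uL [R uR [d sd eB]]] := int_Smith_normal_form (BFmx o t).
rewrite smith_diag in eB.
set s := minn (find (fun x : int => x == 0%R) d) n.
have hs := @smith_s n d sd.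
have sn : (s <= n)%N by rewrite geq_minr.
have eg : gX o t = gB (BFmx o t).
  by rewrite /gB /gX /BFmx subKr.
have rr : rX o t = (n - s)%N.
  move: hdelta; rewrite /deltaX /rankBF (rankB uL uR sn hs eB).
  by move/eqP; rewrite subr_eq0 eqz_nat => /eqP.
have hf : find (fun c : int => c != 0) (gB (BFmx o t) \Po ('X + 1)) = (n - s)%N.
  by move: rr; rewrite /rX /taylor1 eg.
have [tors [h1 h2 h3]] := main_sec uL uR hs eB hf.
have eS : gstar1 o t = (gB (BFmx o t) \Po ('X + 1))`_(n - s).
  by rewrite /gstar1 /taylor1 -eg -rr.
by exists tors; rewrite eS.
Qed.
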